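(* Let $N,k,s,d$ be positive integers with $s\ge3$, let $N\ge s+1$ be prime, and let $\Lambda\subseteq\mathbb{Z}_N$ belong to the family $\Lambda_d(2k,s)$. Let $\vec s=(s_1,\dots,s_l)$ be positive integers with $s_1+\dots+s_l=k$, and let $B(\vec s)=\{i\in[l]: s_i>s\}$. For $x\in\mathbb{Z}_N$ let $E(\vec s)(x)$ be the set of tuples $(\lambda_1,\dots,\lambda_k)\in\Lambda^k$ with $\lambda_1+\dots+\lambda_k=x$ for which there exist pairwise distinct $\tilde\lambda_1,\dots,\tilde\lambda_l\in\Lambda$ such that, for each $i\in[l]$, exactly $s_i$ of the entries $\lambda_1,\dots,\lambda_k$ equal $\tilde\lambda_i$ (so $s_1\tilde\lambda_1+\dots+s_l\tilde\lambda_l=x$). Then for every $x\in\mathbb{Z}_N$, $$|E(\vec s)(x)|\le\frac{k!}{s_1!\cdots s_l!}(s+1)^d|\Lambda|^{|B(\vec s)|}.$$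
   Context: $\mathbb{Z}_N=\mathbb{Z}/N\mathbb{Z}$, $[l]=\{1,\dots,l\}$. Family $\Lambda_d(k,s)$ (for positive integers $k,s,d$): a set $\Lambda=\{\lambda_1,\dots,\lambda_m\}\subseteq\mathbb{Z}_N$ with $\Lambda\cap(-\Lambda)=\emptyset$ belongs to $\Lambda_d(k,s)$ if for every choice of integer vectors $\vec v_1,\dots,\vec v_m\in\mathbb{Z}^d$, $\vec v_j=(v_j^{(1)},\dots,v_j^{(d)})$, with $|v_j^{(i)}|\le s$ for all $i,j$ and $\sum_{j=1}^m|v_j^{(i)}|\le k$ for every $i\in[d]$, satisfying $\lambda_1\vec v_1+\dots+\lambda_m\vec v_m\equiv0\pmod N$ (componentwise), the $d\times m$ matrix $(v_j^{(i)})$ has rank at most $d-1$ (rank over $\mathbb{Q}$). *)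

(* Defs.v *)
From HB Require Import structures.
From mathcomp Require Import all_boot all_order all_algebra.
Set Implicit Arguments. Unset Strict Implicit. Unset Printing Implicit Defensive.
Import Order.TTheory GRing.Theory Num.Theory.
Local Open Scope ring_scope.

(* Z_N is modelled by 'Z_N (used only for prime N, so N >= 2). *)
Definition in_Lambda (N d k s : nat) (L : {set 'Z_N}) : Prop :=
  [disjoint L & [set - x | x in L]] /\
  forall v : 'I_d -> 'Z_N -> int,
    (forall i x, x \in L -> `|v i x| <= (s%:Z)) ->
    (forall i, \sum_(x in L) `|v i x| <= (k%:Z)) ->
    (forall i, \sum_(x in L) x *~ v i x = 0) ->
    (\rank (\matrix_(i < d, j < #|L|) ((v i (enum_val j))%:~R : rat)) <= d.-1)%N.

Definition Eset (N k l : nat) (L : {set 'Z_N}) (sv : 'I_l -> nat) (x : 'Z_N)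
  : {set {ffun 'I_k -> 'Z_N}} :=
  [set t : {ffun 'I_k -> 'Z_N} |
     [&& [forall j, t j \in L], \sum_(j < k) t j == x &
         [exists lt : {ffun 'I_l -> 'Z_N},
            [&& injectiveb lt, [forall i, lt i \in L] &
                [forall i, #|[set j | t j == lt i]| == sv i]]]]].

Definition Bset (l s : nat) (sv : 'I_l -> nat) : {set 'I_l} :=
  [set i | (s < sv i)%N].

(* Main.v *)
Require Import Defs.
From HB Require Import structures.
From mathcomp Require Import all_boot all_order all_algebra.
Import Order.TTheory GRing.Theory Num.Theory.
From mathcomp Require Import zify ring.
Set Implicit Arguments. Unset Strict Implicit. Unset Printing Implicit Defensive.

Section LA.
Local Open Scope ring_scope.

Lemma rowsub_free (F : fieldType) m n p (A : 'M[F]_(m, n)) (h : 'I_p -> 'I_m) :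
  row_free A -> injective h -> row_free (rowsub h A).
Proof.
move=> fA hi; apply: inj_row_free => v.
rewrite rowsubE mulmxA => /eqP; rewrite mulmx_free_eq0 // => /eqP v0.
apply/rowP => i; have := congr1 (fun w : 'rV_m => w 0 (h i)) v0.
rewrite !mxE /= (bigD1 i) //= big1 ?addr0 ?mxE.
  by rewrite eqxx mulr1.
by move=> j ji; rewrite !mxE (inj_eq hi) (negbTE ji) mulr0.
Qed.

Lemma LAcount (U : finType) (S : {set U}) (n d s : nat)
  (e : U -> {ffun 'I_n -> 'I_s.+1}) :
  (0 < d)%N -> {in S &, injective e} ->
  (forall (a : 'I_d -> U) b, (forall i, a i \in S) -> b \in S ->
     (\rank (\matrix_(i < d, j < n) ((e (a i) j : nat)%:R - (e b j : nat)%:R : rat)%R) <= d.-1)%N) ->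
  (#|S| <= (s.+1) ^ d.-1)%N.
Proof.
move=> d0 einj H.
have [->|[b0 bS]] := set_0Vmem S; first by rewrite cards0.
pose M := \matrix_(i < #|S|, j < n) (((e (enum_val i) j : nat)%:R : rat) - (e b0 j : nat)%:R).
have rM : (\rank M <= d.-1)%N.
  rewrite leqNgt; apply/negP => ltM.
  have ledM : (d <= \rank M)%N by move: ltM; case: (d) d0.
  pose g := (maxrankfun M) \o (widen_ord ledM).
  have := H (fun i => enum_val (g i)) b0 (fun i => enum_valP _) bS.
  have -> : \matrix_(i < d, j < n) (((e (enum_val (g i)) j : nat)%:R : rat) - (e b0 j : nat)%:R)
     = rowsub g M by apply/matrixP => i j; rewrite !mxE.
  have : row_free (rowsub g M).
    rewrite /g rowsub_comp; apply: rowsub_free; first exact: maxrowsub_free.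
    by move=> i j /(congr1 val) /= /val_inj.
  rewrite /row_free => /eqP->; case: (d) d0 => // d' _ /=; by rewrite ltnn.
pose T := M^T.
pose h := maxrankfun T.
have /submxP [D TD] : (T <= rowsub h T)%MS by rewrite eq_maxrowsub.
pose f u := [ffun k => e u (h k)].
have finj : {in S &, injective f}.
  move=> u1 u2 u1S u2S /ffunP fe; apply: einj => //.
  have Mcol : forall i1 i2 : 'I_#|S|, (forall k, M i1 (h k) = M i2 (h k)) -> forall j, M i1 j = M i2 j.
    move=> i1 i2 hk j.
    have := congr1 (fun A : 'M[rat]_(n, #|S|) => A j i1) TD; have := congr1 (fun A : 'M[rat]_(n, #|S|) => A j i2) TD.
    rewrite !mxE => -> ->; apply: eq_bigr => k _; rewrite !mxE.
    by have := hk k; rewrite !mxE => ->.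
  apply/ffunP => j; apply: val_inj.
  have hk : forall k, M (enum_rank_in u1S u1) (h k) = M (enum_rank_in u1S u2) (h k).
    move=> k; rewrite !mxE !enum_rankK_in //.
    by have := fe k; rewrite !ffunE => ->.
  have := Mcol _ _ hk j; rewrite !mxE !enum_rankK_in //.
  by move/(congr1 (fun z => z + (e b0 j : nat)%:R)); rewrite !subrK => /eqP; rewrite eqr_nat => /eqP.
rewrite -(card_in_imset finj).
apply: (leq_trans (max_card _)); rewrite card_ffun !card_ord.
by rewrite leq_pexp2l // mxrank_tr.
Qed.

End LA.

Lemma card_sum (I : finType) (P : pred I) : #|[set j | P j]| = \sum_j (P j : nat).
Proof.
rewrite -sum1_card big_mkcond /=; apply: eq_bigr => j _; rewrite inE; by case: (P j).
Qed.

Lemma sumcnt (T : finType) k (t : {ffun 'I_k -> T}) :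
  \sum_y #|[set j | t j == y]| = k.
Proof.
under eq_bigr => y _ do rewrite card_sum.
rewrite exchange_big /= -[k in RHS]card_ord -sum1_card; apply: eq_bigr => j _.
by rewrite (bigD1 (t j)) //= eqxx big1 // => y /negbTE; rewrite eq_sym => ->.
Qed.

Definition Sk (T : finType) k (c : T -> nat) :=
  [set t : {ffun 'I_k -> T} | [forall y, #|[set j | t j == y]| == c y]].

Lemma ML (T : finType) k (c : T -> nat) :
  #|Sk k c| * \prod_y (c y)`! <= k`!.
Proof.
elim: k c => [|k IH] c.
  have [->|[t0 t0S]] := set_0Vmem (Sk 0 c); first by rewrite cards0.
  rewrite big1 ?muln1.
    by apply: (leq_trans (max_card _)); rewrite card_ffun card_ord.
  move=> y _; move: t0S; rewrite inE => /forallP /(_ y) /eqP <-.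
  by rewrite card_sum big_ord0.
have [->|[t0 t0S]] := set_0Vmem (Sk k.+1 c); first by rewrite cards0.
have sumc : \sum_y c y = k.+1.
  rewrite -(sumcnt t0); apply: eq_bigr => y _.
  by move: t0S; rewrite inE => /forallP /(_ y) /eqP ->.
rewrite -sum1_card (partition_big (fun t : {ffun 'I_k.+1 -> T} => t ord_max) predT) //=.
rewrite big_distrl /=.
apply: (@leq_trans (\sum_mu c mu * k`!)); last by rewrite -big_distrl /= sumc factS.
apply: leq_sum => mu _.
set Smu := [set t in Sk k.+1 c | t ord_max == mu].
rewrite (eq_bigl (mem Smu)); last by move=> t /=; rewrite !inE.
rewrite sum1_card.
case cmu : (c mu) => [|n].
  have -> : Smu = set0.
    apply/setP => t; rewrite !inE; apply/negP => /andP [/forallP /(_ mu) /eqP].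
    rewrite cmu => /eqP; rewrite cards_eq0 => /eqP /setP /(_ ord_max).
    by rewrite !inE => -> /eqP.
  by rewrite cards0.
pose c' := fun y => if y == mu then n else c y.
pose w := fun t : {ffun 'I_k.+1 -> T} => [ffun j : 'I_k => t (widen_ord (leqnSn k) j)].
have winj : {in Smu &, injective w}.
  move=> t1 t2; rewrite !inE => /andP [_ /eqP e1] /andP [_ /eqP e2] /ffunP we.
  apply/ffunP => j; case: (unliftP ord_max j) => [j'|] ->.
    have -> : lift ord_max j' = widen_ord (leqnSn k) j'.
      by apply: val_inj; rewrite /= /bump leqNgt ltn_ord.
    by have := we j'; rewrite !ffunE.
  by transitivity mu; [exact: e1 | symmetry; exact: e2].
have wS : [set w t | t in Smu] \subset Sk k c'.
  apply/subsetP => _ /imsetP [t tS ->]; move: tS; rewrite !inE => /andP [/forallP ct /eqP tm].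
  apply/forallP => y; have := ct y; rewrite !card_sum big_ord_recr /= tm.
  move=> H; rewrite /w; under eq_bigr => j _ do rewrite ffunE.
  move: H.
  rewrite /c'; case: (eqVneq y mu) => [->|ne].
    by rewrite cmu addn1 eqSS.
  by rewrite addn0.
have lecard : #|Smu| <= #|Sk k c'| by rewrite -(card_in_imset winj); apply: subset_leq_card.
have prodc : \prod_y (c y)`! = n.+1 * \prod_y (c' y)`!.
  rewrite (bigD1 mu) //= [in RHS](bigD1 mu) //= cmu /c' eqxx factS mulnA; congr (_ * _).
  by apply: eq_bigr => y /negbTE ->.
rewrite prodc mulnCA leq_mul2l; apply/orP; right.
exact: leq_trans (leq_mul lecard (leqnn _)) (IH c').
Qed.

Lemma fiber_bound (T U : finType) (A : {set T}) (f : T -> U) (P b : nat) :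
  (forall y, y \in f @: A -> #|[set a in A | f a == y]| * P <= b) ->
  #|A| * P <= #|f @: A| * b.
Proof.
move=> H; rewrite -sum1_card (partition_big f (mem (f @: A))) /=; last first.
  by move=> a aA; apply: imset_f.
rewrite big_distrl /= -sum_nat_const; apply: leq_sum => y yA.
rewrite (eq_bigl (mem [set a in A | f a == y])) ?sum1_card ?H // => a.
by rewrite !inE.
Qed.

Section Facts.
Variables (N k l : nat) (L : {set 'Z_N}) (sv : 'I_l -> nat) (x : 'Z_N).
Hypothesis hsum : \sum_(i < l) sv i = k.

Definition cntf (t : {ffun 'I_k -> 'Z_N}) y := #|[set j | t j == y]|.

Lemma Eunpack t : t \in @Eset N k l L sv x ->
  [/\ forall j, t j \in L, (\sum_j t j)%R = x &
   exists lt : {ffun 'I_l -> 'Z_N}, [/\ injective lt, forall i, lt i \in L &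
      forall i, cntf t (lt i) = sv i]].
Proof.
rewrite inE => /and3P [/forallP tL /eqP ts /existsP [lt /and3P [/injectiveP li /forallP ltL /forallP lc]]].
split => //; exists lt; split => // i; exact/eqP/lc.
Qed.

Lemma cnt_out t (lt : {ffun 'I_l -> 'Z_N}) : injective lt ->
  (forall i, cntf t (lt i) = sv i) -> forall y, (forall i, lt i != y) -> cntf t y = 0.
Proof.
move=> li lc y yn.
have := sumcnt t; rewrite (bigID (mem [set lt i | i in 'I_l])) /=.
rewrite big_imset /=; last by move=> i j _ _; apply: li.
under eq_bigr => i _ do rewrite -/(cntf t (lt i)) lc.
rewrite hsum => H.
have /eqP : \sum_(i < (Zp_trunc N).+2 | i \notin [set lt i0 | i0 : 'I_l]) #|[set j | t j == i]| = 0.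
  by apply/eqP; rewrite -(eqn_add2l k) addn0 H.
rewrite sum_nat_eq0 => /forallP /(_ y).
rewrite /cntf; case: imsetP => [[i _ yi]|_ /=]; first by move: (yn i); rewrite yi eqxx.
by move/eqP.
Qed.

Lemma prod_cnt t (lt : {ffun 'I_l -> 'Z_N}) : injective lt ->
  (forall i, cntf t (lt i) = sv i) -> \prod_y (cntf t y)`! = \prod_i (sv i)`!.
Proof.
move=> li lc.
rewrite (bigID (mem [set lt i | i in 'I_l])) /=.
rewrite big_imset /=; last by move=> i j _ _; apply: li.
rewrite [X in _ * X = _]big1 ?muln1; first by apply: eq_bigr => i _; rewrite lc.
move=> y; case: imsetP => [//|yn _].
rewrite (cnt_out li lc) // => i; apply/eqP => e; apply: yn; exists i => //.
Qed.

Definition cnt t : {ffun 'Z_N -> 'I_k.+1} := [ffun y => inord (cntf t y)].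

Lemma cntf_le t y : cntf t y <= k.
Proof. by rewrite /cntf; apply: leq_trans (max_card _) _; rewrite card_ord. Qed.

Lemma cnt_val t y : (cnt t y : nat) = cntf t y.
Proof. by rewrite ffunE inordK // ltnS cntf_le. Qed.

Lemma step1 : #|@Eset N k l L sv x| * \prod_i (sv i)`! <= #|cnt @: @Eset N k l L sv x| * k`!.
Proof.
apply: fiber_bound => _ /imsetP [t0 t0E ->].
have [_ _ [lt [li _ lc]]] := Eunpack t0E.
rewrite -(prod_cnt li lc).
apply: leq_trans (ML _ (cntf t0)); rewrite leq_mul2r; apply/orP; right.
apply: subset_leq_card; apply/subsetP => t; rewrite !inE => /andP [_ /eqP e].
apply/forallP => y; rewrite -/(cntf t y) -!cnt_val e.
by [].
Qed.

Lemma C_facts t : t \in @Eset N k l L sv x ->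
  [/\ forall y, y \notin L -> (cnt t y : nat) = 0,
      \sum_y (cnt t y : nat) = k & (\sum_y y *+ (cnt t y : nat))%R = x].
Proof.
move=> tE; have [tL ts _] := Eunpack tE.
split.
- move=> y yL; rewrite cnt_val /cntf; apply/eqP; rewrite cards_eq0; apply/eqP/setP => j.
  by rewrite !inE; apply/negP => /eqP e; move: (tL j); rewrite e (negbTE yL).
- by rewrite -[RHS](sumcnt t); apply: eq_bigr => y _; rewrite cnt_val.
- rewrite -ts (partition_big (fun j => t j) predT) //=; apply: eq_bigr => y _.
  rewrite cnt_val /cntf -sumr_const; apply: congr_big => // j; first by rewrite inE.
  by rewrite inE => /eqP.
Qed.

End Facts.

Section Step2.
Variables (N k l s d : nat) (L : {set 'Z_N}) (sv : 'I_l -> nat) (x : 'Z_N).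
Hypothesis hsum : \sum_(i < l) sv i = k.
Hypothesis hL : @in_Lambda N d (2 * k) s L.
Hypothesis d0 : 0 < d.

Local Notation E := (@Eset N k l L sv x).
Local Notation C := (@cnt N k @: E).
Local Notation B := (@Bset l s sv).

Definition smallf (c : {ffun 'Z_N -> 'I_k.+1}) y : nat := if s < c y then 0 else (c y : nat).
Definition bigv (c : {ffun 'Z_N -> 'I_k.+1}) y : nat := if s < c y then (c y : nat) else 0.
Definition bigf (c : {ffun 'Z_N -> 'I_k.+1}) : {ffun 'Z_N -> 'I_k.+1} :=
  [ffun y => inord (bigv c y)].
Definition small (c : {ffun 'Z_N -> 'I_k.+1}) : {ffun 'I_#|L| -> 'I_s.+1} :=
  [ffun j => inord (smallf c (enum_val j))].
Definition phi (g : {ffun 'I_l -> 'Z_N}) : {ffun 'Z_N -> 'I_k.+1} :=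
  [ffun y => inord (\sum_(i in B) (g i == y) * sv i)].

Lemma smallf_le c y : smallf c y <= s.
Proof. by rewrite /smallf; case: ltnP. Qed.

Lemma bigv_val c y : (bigf c y : nat) = bigv c y.
Proof.
rewrite ffunE inordK // /bigv; case: ifP => // _; exact: ltn_ord.
Qed.

Lemma small_val c j : (small c j : nat) = smallf c (enum_val j).
Proof. by rewrite ffunE inordK // ltnS smallf_le. Qed.

Lemma split_c (c : {ffun 'Z_N -> 'I_k.+1}) y : (c y : nat) = bigv c y + smallf c y.
Proof. by rewrite /bigv /smallf; case: ifP; rewrite ?addn0. Qed.

Lemma bigcount : #|bigf @: C| <= #|L| ^ #|B|.
Proof.
rewrite -(card_pffun_on (0%R : 'Z_N)); apply: leq_trans (leq_imset_card phi _).
apply: subset_leq_card; apply/subsetP => _ /imsetP [_ /imsetP [t tE ->] ->].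
have [_ _ [lt [li ltL lc]]] := Eunpack tE.
pose g : {ffun 'I_l -> 'Z_N} := [ffun i => if i \in B then lt i else 0%R].
apply/imsetP; exists g.
  apply/pffun_onP; split.
    by apply/subsetP => i; rewrite inE ffunE; case: ifP => // _; rewrite eqxx.
  by move=> _ /imageP [i iB ->]; rewrite ffunE iB.
apply/ffunP => y; rewrite !ffunE; congr inord.
rewrite /bigv cnt_val.
have gE : \sum_(i in B) (g i == y) * sv i = \sum_(i in B) (lt i == y) * sv i.
  by apply: eq_bigr => i iB; rewrite ffunE iB.
rewrite gE.
case: (pickP (fun i => lt i == y)) => [i0 /eqP <-|ny]; last first.
  rewrite (cnt_out hsum li lc) => [|i]; last by rewrite ny.
  by rewrite big1 // => i _; rewrite ny.
rewrite lc.
have others : forall i, i != i0 -> (lt i == lt i0) * sv i = 0.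
  by move=> i ne; rewrite (inj_eq li) (negbTE ne).
case: (boolP (i0 \in B)) => i0B.
  rewrite (bigD1 i0) //= eqxx mul1n big1 ?addn0; last by move=> i /andP [_]; apply: others.
  by move: i0B; rewrite inE => ->.
rewrite big1; last by move=> i iB; apply: others; apply/eqP => e; move: i0B; rewrite -e iB.
by move: i0B; rewrite inE => /negbTE ->.
Qed.

Lemma step2 : #|C| <= #|L| ^ #|B| * (s.+1) ^ d.-1.
Proof.
have H : forall be, be \in bigf @: C -> #|[set c in C | bigf c == be]| * 1 <= (s.+1) ^ d.-1.
  move=> be _; rewrite muln1.
  have Sf : forall c, c \in [set c in C | bigf c == be] ->
     [/\ forall y, y \notin L -> (c y : nat) = 0, \sum_y (c y : nat) = k,
         (\sum_y y *+ (c y : nat))%R = x & bigf c = be].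
    move=> c; rewrite inE => /andP [/imsetP [t tE ->] /eqP bc].
    by have [o1 o2 o3] := C_facts tE; split.
  have key : forall c, c \in [set c in C | bigf c == be] ->
     (\sum_(y in L) y *+ smallf c y = x - \sum_y y *+ (be y : nat))%R.
    move=> c cS; have [o1 _ o3 bc] := Sf c cS.
    have e1 : (\sum_y y *+ (be y : nat) = \sum_y y *+ bigv c y)%R.
      by rewrite -bc; apply: eq_bigr => y _; rewrite bigv_val.
    have e2 : (\sum_(y in L) y *+ smallf c y = \sum_y y *+ smallf c y)%R.
      rewrite [RHS](bigID (mem L)) /= [X in _ = (_ + X)%R]big1 ?addr0 // => y yL.
      by rewrite /smallf o1 // if_same.
    rewrite e1 e2 -o3 -sumrB; apply: eq_bigr => y _.
    by rewrite split_c mulrnDr [X in _ = (X - _)%R]addrC addrK.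
  have key2 : forall c, c \in [set c in C | bigf c == be] ->
     (\sum_(y in L) (c y : nat) = k)%N.
    move=> c cS; have [o1 o2 _ _] := Sf c cS.
    rewrite -[RHS]o2 [in RHS](bigID (mem L)) /= [X in _ = _ + X]big1 ?addn0 // => y; exact: o1.
  apply: (@LAcount _ [set c in C | bigf c == be] #|L| d s small d0).
  - move=> c1 c2 c1S c2S /ffunP se.
    have [o1 _ _ b1] := Sf c1 c1S; have [o2 _ _ b2] := Sf c2 c2S.
    apply/ffunP => y; apply: ord_inj; rewrite !split_c.
    have bb : bigv c1 y = bigv c2 y by rewrite -!bigv_val b1 b2.
    rewrite bb; congr addn.
    case: (boolP (y \in L)) => yL.
      by have := se (enum_rank_in yL y); move/(congr1 (@nat_of_ord _)); rewrite !small_val enum_rankK_in.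
    by rewrite /smallf !o1 ?o2.
  - move=> a b aS bS.
    have [_ HL] := hL.
    pose v := fun i y => (Posz (smallf (a i) y) - Posz (smallf b y))%R.
    have h1 : forall i y, y \in L -> (`|v i y| <= Posz s)%R.
      move=> i y _; rewrite /v; have := smallf_le (a i) y; have := smallf_le b y; lia.
    have h2 : forall i, (\sum_(y in L) `|v i y| <= Posz (2 * k))%R.
      move=> i; apply: (@le_trans _ _ (\sum_(y in L) Posz (smallf (a i) y + smallf b y)%N)%R).
        by apply: ler_sum => y _; rewrite /v; lia.
      rewrite -(big_morph Posz PoszD (erefl (Posz 0))) lez_nat big_split /= mul2n -addnn.
      apply: leq_add.
        by rewrite -(key2 _ (aS i)); apply: leq_sum => y _; rewrite /smallf; case: ifP.
      by rewrite -(key2 _ bS); apply: leq_sum => y _; rewrite /smallf; case: ifP.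
    have h3 : forall i, (\sum_(y in L) y *~ v i y = 0)%R.
      move=> i; rewrite /v; under eq_bigr => y _ do rewrite mulrzBr -!pmulrn.
      by rewrite sumrB (key _ (aS i)) (key _ bS) subrr.
    have := HL v h1 h2 h3.
    have -> : (\matrix_(i < d, j < #|L|) ((v i (enum_val j))%:~R : rat))%R
       = (\matrix_(i < d, j < #|L|) ((small (a i) j : nat)%:R - (small b j : nat)%:R : rat))%R.
      by apply/matrixP => i j; rewrite !mxE !small_val /v intrB -!pmulrn.
    by [].
have := fiber_bound (A := C) (f := bigf) (P := 1) H.
rewrite muln1 => /leq_trans; apply; rewrite leq_mul2r bigcount orbT.
all: by [].
Qed.

End Step2.


Unset Implicit Arguments.
Local Open Scope ring_scope.

Theorem lemma25 (N k s d : nat) (L : {set 'Z_N}) (l : nat) (sv : 'I_l -> nat)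
  (x : 'Z_N) :
  (0 < N)%N -> (0 < k)%N -> (0 < s)%N -> (0 < d)%N ->
  (3 <= s)%N -> prime N -> (s.+1 <= N)%N ->
  @in_Lambda N d (2 * k) s L ->
  (forall i, 0 < sv i)%N ->
  (\sum_(i < l) sv i)%N = k ->
  (#|@Eset N k l L sv x|%:R : rat) <=
    (k`!)%:R / (\prod_(i < l) (sv i)`!)%:R * ((s.+1) ^ d)%:R
    * (#|L| ^ #|@Bset l s sv|)%:R.
Proof.
move=> _ _ _ d0 _ _ _ hL _ hsum.
have h1 := step1 L x hsum.
have h2 := step2 x hsum hL d0.
set P := \prod_(i < l) (sv i)`! in h1 *.
have P0 : (0 < P)%N by apply: prodn_gt0 => i; apply: fact_gt0.
have key : (#|@Eset N k l L sv x| * P <= k`! * (s.+1) ^ d * #|L| ^ #|@Bset l s sv|)%N.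
  have h3 : (#|[set cnt x | x in @Eset N k l L sv x]| <= #|L| ^ #|@Bset l s sv| * (s.+1) ^ d)%N.
    apply: (leq_trans h2); rewrite leq_mul2l; apply/orP; right.
    by rewrite leq_pexp2l //; case: (d) d0.
  apply: (leq_trans h1); apply: leq_trans (leq_mul h3 (leqnn _)) _.
  by apply: eq_leq; ring.
have -> : ((k`!)%:R / P%:R * ((s.+1) ^ d)%:R * (#|L| ^ #|@Bset l s sv|)%:R : rat)%R
   = ((k`! * (s.+1) ^ d * #|L| ^ #|@Bset l s sv|)%N%:R / P%:R)%R.
  by rewrite !natrM; ring.
by rewrite ler_pdivlMr ?ltr0n // -natrM ler_nat.
Qed.
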